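(* Let $s,u>0$ and $\nu_0=0$. For $\gamma>0$ let $\bar y_2(s,\gamma,u)=\frac12\big(1+\frac s\gamma-\sqrt{(1+s/\gamma)^2-4u/\gamma}\big)$. Then $$\lim_{\gamma\to0}\bar y_2(s,\gamma,u)=\frac us .$$ Moreover, denoting by $y_\infty(y_0,s,\gamma,u)=\lim_{t\to\infty}y(t;y_0)$ the long-term limit of the solution of $\dot y=-y(1-y)[s+\gamma(1-y)]+u(1-y)$, $y(0)=y_0\in[0,1]$, we have $$\lim_{\gamma\to0}y_\infty(y_0,s,\gamma,u)=\begin{cases}\min\{u/s,1\}, & y_0\in[0,1),\\ 1, & y_0=1.\end{cases}$$ *)

(* Defs.v *)
From HB Require Import structures.
From mathcomp Require Import all_boot all_order all_algebra.
From mathcomp Require Import all_classical all_reals all_analysis.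
Set Implicit Arguments. Unset Strict Implicit. Unset Printing Implicit Defensive.
Import Order.TTheory GRing.Theory Num.Theory.
Import numFieldNormedType.Exports.
Local Open Scope classical_set_scope.
Local Open Scope ring_scope.

Definition ybar2 (R : realType) (s g u : R) : R :=
  2^-1 * (1 + s / g - Num.sqrt ((1 + s / g) ^+ 2 - 4 * u / g)).

Definition ode_rhs (R : realType) (s g u y : R) : R :=
  - y * (1 - y) * (s + g * (1 - y)) + u * (1 - y).

Definition is_ivp_solution (R : realType) (s g u y0 : R) (y : R -> R) : Prop :=
  y 0 = y0 /\
  {within `[0, +oo[, continuous y} /\
  (forall t : R, 0 < t -> is_derive t 1 y (ode_rhs s g u (y t))).

(* Main.v *)
Require Import Defs.
From HB Require Import structures.
From mathcomp Require Import all_boot all_order all_algebra.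
From mathcomp Require Import all_classical all_reals all_analysis.
From mathcomp Require Import ring lra.
Import Order.TTheory GRing.Theory Num.Theory.
Import numFieldNormedType.Exports.
Local Open Scope classical_set_scope.
Local Open Scope ring_scope.
Set Implicit Arguments. Unset Strict Implicit.
Section S.
Variable R : realType.
Lemma hder (Y : R -> R) (c a t dY : R) : is_derive t 1 Y dY ->
  is_derive t 1 (fun x => (Y x - c) ^+ 2 * expR (a * x))
    (2 * (Y t - c) * dY * expR (a * t) + (Y t - c) ^+ 2 * (a * expR (a * t))).
Proof.
move=> dy.
have e1 : is_derive t 1 (expR \o (a \*: id)) (expR (a * t) * (a *: 1)).
  by apply: is_derive1_comp.
have e2 : is_derive t 1 (Y - cst c) (dY - 0) by apply: is_deriveB.
have e3 := is_deriveX 2 e2.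
have e4 := is_deriveM e3 e1.
have -> : (fun x => (Y x - c) ^+ 2 * expR (a * x)) = ((Y - cst c) ^+ 2 * (expR \o (a \*: id))).
  by apply/funext => x /=.
apply: is_derive_eq e4 _.
rewrite /= /GRing.scale /= !mulr1. rewrite -[(_ ^+ 2) t]/((Y t - c) ^+ 2) -[(Y - cst c) t]/(Y t - c). ring.
Qed.

Lemma hcont (Y : R -> R) (c a T : R) : {within `[0, T], continuous Y} ->
  {within `[0, T], continuous (fun x => (Y x - c) * (Y x - c) * expR (a * x))}.
Proof.
move=> cY x.
have c1 : {for x, continuous ((Y : subspace `[0, T] -> R) - cst c)}.
  by apply: continuousB; [exact: cY | exact: cst_continuous].
have c2 : {within `[0, T], continuous (fun x => expR (a * x))}.
  apply: continuous_subspaceT => y.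
  apply: (@continuous_comp _ _ _ (fun x => a * x) expR); last exact: continuous_expR.
  by apply: continuousM; [exact: cst_continuous | by move=> ?].
apply: (@continuousM _ (subspace `[0, T]) (fun x => (Y x - c) * (Y x - c)) (fun x => expR (a * x))); last exact: c2.
by apply: (@continuousM _ (subspace `[0, T]) (fun x => (Y x - c)) (fun x => (Y x - c))).
Qed.

Lemma uq (Y k : R -> R) (c : R) :
  {within `[0, +oo[, continuous Y} ->
  (forall t : R, 0 < t -> is_derive t 1 Y ((Y t - c) * k (Y t))) ->
  continuous k ->
  forall T, 0 <= T -> (Y T = c <-> Y 0 = c).
Proof.
move=> cY dY ck T T0.
have cYT : {within `[0, T], continuous Y}.
  by apply: continuous_subspaceW cY; apply: subset_itvl; rewrite bnd_simp.
have ckY : {within `[0, T], continuous (k \o Y)}.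
  by move=> x; apply: (@continuous_comp (subspace `[0, T]) R R Y k x); [exact: cYT | exact: ck].
have [M1 _ hM1] := EVT_max T0 ckY.
have [M2 _ hM2] := EVT_min T0 ckY.
pose h a := fun x => (Y x - c) * (Y x - c) * expR (a * x).
have hd (a t : R) : 0 < t -> is_derive t 1 (h a)
    ((Y t - c) * (Y t - c) * expR (a * t) * (2 * k (Y t) + a)).
  move=> t0; apply: is_derive_eq; first exact: (hder c a (dY t t0)).
  ring.
have hc (a : R) : {within `[0, T], continuous (h a)} by exact: hcont.
have inT (t : R) : t \in `]0, T[ -> 0 < t by rewrite in_itv /= => /andP[].
have sq (t a : R) : 0 <= (Y t - c) * (Y t - c) * expR (a * t).
  by rewrite mulr_ge0 ?expR_ge0 // -expr2 sqr_ge0.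
have sq0 (t a : R) : (Y t - c) * (Y t - c) * expR (a * t) = 0 -> Y t = c.
  move/eqP; rewrite mulf_eq0 (gt_eqF (expR_gt0 _)) orbF mulf_eq0 orbb subr_eq0.
  by move/eqP.
split => [YT|Y0].
- have : h (- 2 * k (Y M2)) 0 <= h (- 2 * k (Y M2)) T.
    apply: (@ger0_derive1_ndecr _ _ 0 T) => //.
    all: try exact: hc.
    - move=> x /inT x0; exact: (@ex_derive _ _ _ _ _ _ _ (hd _ _ x0)).
    move=> x xT.
    rewrite derive1E; have [_ ->] := hd (- 2 * k (Y M2)) x (inT _ xT).
      rewrite mulr_ge0 // ?sq //.
      have : k (Y M2) <= k (Y x) by apply: hM2; rewrite in_itv /=; move: xT; rewrite in_itv /= => /andP[/ltW -> /ltW ->].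
      lra.
  rewrite /h YT subrr !mul0r => H.
  by apply: (sq0 0 (- 2 * k (Y M2))); apply/le_anti; rewrite H sq.
- have : h (- 2 * k (Y M1)) T <= h (- 2 * k (Y M1)) 0.
    apply: (@ler0_derive1_nincr _ _ 0 T) => //.
    all: try exact: hc.
    - move=> x /inT x0; exact: (@ex_derive _ _ _ _ _ _ _ (hd _ _ x0)).
    move=> x xT.
    rewrite derive1E; have [_ ->] := hd (- 2 * k (Y M1)) x (inT _ xT).
      rewrite mulr_ge0_le0 // ?sq //.
      have : k (Y x) <= k (Y M1) by apply: hM1; rewrite in_itv /=; move: xT; rewrite in_itv /= => /andP[/ltW -> /ltW ->].
      lra.
  rewrite /h Y0 subrr !mul0r => H.
  by apply: (sq0 T (- 2 * k (Y M1))); apply/le_anti; rewrite H sq.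
Qed.
Lemma lim_root_pos (Y f : R -> R) (L : R) :
  (forall t : R, 0 < t -> is_derive t 1 Y (f (Y t))) -> continuous f ->
  Y t @[t --> +oo] --> L -> ~ (0 < f L).
Proof.
move=> dY cf YL fL0.
have fYL : (f \o Y) t @[t --> +oo] --> f L.
  by apply: continuous_cvg => //; exact: cf.
have H1 : \forall t \near +oo, f L / 2 < (f \o Y) t.
  by apply: cvgr_gt; [exact: fYL | lra].
have H2 : \forall t \near +oo, Y t < L + 1.
  by apply: cvgr_lt; [exact: YL | lra].
have H3 : \forall t \near +oo, L - 1 < Y t.
  by apply: cvgr_gt; [exact: YL | lra].
have [M [Mr HM]] : \forall t \near +oo, f L / 2 < (f \o Y) t /\ (Y t < L + 1 /\ L - 1 < Y t).
  by apply/near_andP; split => //; apply/near_andP.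
pose t1 := Num.max M 0 + 1.
have m1 : M <= Num.max M 0 by rewrite le_max lexx.
have m2 : 0 <= Num.max M 0 by rewrite le_max lexx orbT.
have t1M : M < t1 by rewrite /t1; lra.
have t10 : 0 < t1 by rewrite /t1; lra.
pose t2 := t1 + 4 / f L.
have t12 : t1 < t2 by rewrite /t2 ltrDl divr_gt0.
have lo1 x : x \in `]t1, t2[ -> t1 < x by rewrite in_itv /= => /andP[].
have lo2 x : x \in `[t1, t2] -> t1 <= x by rewrite in_itv /= => /andP[].
have [c cI eq] : exists2 c, c \in `]t1, t2[ & Y t2 - Y t1 = (f \o Y) c * (t2 - t1).
  apply: MVT => //.
    by move=> x /lo1 xI; apply: dY; lra.
  apply: derivable_within_continuous => x /lo2 xI.
  by apply: (@ex_derive _ _ _ _ _ _ _ (dY x _)); lra.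
have := HM t1 t1M; have := HM t2 (lt_trans t1M t12).
have := HM c (lt_trans t1M (lo1 _ cI)) => /= -[fc _] [_ [a2 b2]] [_ [a1 b1]].
have : Y t2 - Y t1 < 2 by lra.
rewrite eq /t2 (addrC t1) addrK.
have : f L / 2 * (4 / f L) = 2 by field; lra.
have hp : 0 < 4 / f L by rewrite divr_gt0.
move: fc hp; set p := 4 / f L; set a := f L / 2; set x := f (Y c); rewrite /= -/x.
nra.
Qed.

Lemma lim_root (Y f : R -> R) (L : R) :
  (forall t : R, 0 < t -> is_derive t 1 Y (f (Y t))) -> continuous f ->
  Y t @[t --> +oo] --> L -> f L = 0.
Proof.
move=> dY cf YL; case: (ltgtP (f L) 0) => // fL.
- exfalso; apply: (@lim_root_pos (fun t => - Y t) (fun y => - f (- y)) (- L)).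
  + move=> t t0; apply: is_derive_eq; first exact: is_deriveN (dY t t0).
    by rewrite opprK.
  + move=> x; apply: continuousN.
    by apply: (@continuous_comp _ _ _ (fun y => - y) f x); [exact: oppr_continuous | exact: cf].
  + exact: cvgN.
  + by rewrite opprK oppr_gt0.
- by exfalso; apply: (lim_root_pos dY cf YL).
Qed.
Lemma mono_cvg (Y : R -> R) (B : R) :
  (forall x y : R, 0 <= x -> x <= y -> Y x <= Y y) -> (forall t : R, 0 <= t -> Y t <= B) ->
  exists L : R, Y t @[t --> +oo] --> L.
Proof.
move=> mY bY.
pose Z t := if t <= 0 then Y 0 else Y t.
have mZ : nondecreasing_fun Z.
  move=> x y xy; rewrite /Z.
  case: (leP x 0) => x0; case: (leP y 0) => y0.
  - by [].
  - by apply: mY => //; rewrite ltW.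
  - lra.
  - by apply: mY => //; rewrite ltW.
have bZ : has_ubound (range Z).
  exists B => _ [t _ <-]; rewrite /Z; case: (leP t 0) => t0; apply: bY => //.
  exact: ltW.
exists (sup (range Z)).
have ZL := nondecreasing_cvgr mZ bZ.
apply: cvg_trans ZL; apply: near_eq_cvg.
near=> t; rewrite /Z; case: (leP t 0) => // t0.
have : 1 <= t by near: t; exact: nbhs_pinfty_ge.
lra.
Unshelve. all: by end_near.
Qed.
Lemma cont_ext (F G : R -> R) : (forall y, F y = G y) -> continuous G -> continuous F.
Proof. by move=> FG; rewrite (_ : F = G) //; apply/funext. Qed.

Lemma cont3 (a b c d : R) : continuous (fun y : R => a * y ^+ 3 + b * y ^+ 2 + c * y + d).
Proof.
apply: (@cont_ext _ (horner (a *: 'X^3 + b *: 'X^2 + c *: 'X + d%:P))).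
  by move=> y; rewrite !hornerE.
by move=> y; exact: continuous_horner.
Qed.

Definition qf (s g u y : R) := g * y ^+ 2 - (s + g) * y + u.

Section P.
Variables (s g u : R).
Hypotheses (hs : 0 < s) (hg : 0 < g) (hu : 0 < u).

Lemma rhs_q y : ode_rhs s g u y = (1 - y) * qf s g u y.
Proof. rewrite /ode_rhs /qf; ring. Qed.

Lemma rhs_1 y : ode_rhs s g u y = (y - 1) * (- qf s g u y).
Proof. rewrite /ode_rhs /qf; ring. Qed.

Lemma rhs_root c y : qf s g u c = 0 ->
  ode_rhs s g u y = (y - c) * ((1 - y) * g * (y - ((s + g) / g - c))).
Proof.
rewrite /qf => qc.
have -> : u = (s + g) * c - g * c ^+ 2 by lra.
by rewrite /ode_rhs; field; rewrite gt_eqF.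
Qed.

Lemma cont_q : continuous (qf s g u).
Proof.
apply: (cont_ext _ (@cont3 0 g (- (s + g)) u)) => y; rewrite /qf; ring.
Qed.

Lemma cont_mq : continuous (fun y => - qf s g u y).
Proof.
apply: (cont_ext _ (@cont3 0 (- g) (s + g) (- u))) => y; rewrite /qf; ring.
Qed.

Lemma cont_rhs : continuous (ode_rhs s g u).
Proof.
apply: (cont_ext _ (@cont3 (- g) (s + 2 * g) (- (s + g + u)) u)) => y.
rewrite /ode_rhs; ring.
Qed.

Lemma cont_kc (c : R) : continuous (fun y : R => (1 - y) * g * (y - ((s + g) / g - c))).
Proof.
pose c' := (s + g) / g - c.
apply: (cont_ext _ (@cont3 0 (- g) (g + g * c') (- g * c'))) => y.
rewrite -/c'; ring.
Qed.

Lemma cont_within_comp (Y k : R -> R) (T : R) :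
  {within `[0, +oo[, continuous Y} -> continuous k -> {within `[0, T], continuous (k \o Y)}.
Proof.
move=> cY ck.
have cYT : {within `[0, T], continuous Y}.
  by apply: continuous_subspaceW cY; apply: subset_itvl; rewrite bnd_simp.
by move=> x; apply: (@continuous_comp (subspace `[0, T]) R R Y k x); [exact: cYT | exact: ck].
Qed.

Lemma cont_within (Y : R -> R) (T : R) :
  {within `[0, +oo[, continuous Y} -> {within `[0, T], continuous Y}.
Proof.
by move=> cY; apply: continuous_subspaceW cY; apply: subset_itvl; rewrite bnd_simp.
Qed.

Lemma conv (y0 : R) (Y : R -> R) : 0 <= y0 <= 1 -> is_ivp_solution s g u y0 Y ->
  exists L : R, Y t @[t --> +oo] --> L /\ ode_rhs s g u L = 0 /\ L <= 1 /\
    (y0 = 1 -> L = 1) /\ (y0 < 1 -> L < 1 \/ 0 <= qf s g u L).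
Proof.
move=> /andP[y00 y01] [Y0 [cY dY]].
have hs0 := hs; have hg0 := hg; have hu0 := hu.
have cst_case (c : R) : (forall t, 0 <= t -> Y t = c) -> Y t @[t --> +oo] --> c.
  move=> Yc.
  have cc : (fun=> c) (t : R) @[t --> +oo] --> c by apply: cvg_cst.
  apply: cvg_trans cc; apply: near_eq_cvg.
  have : \forall t \near +oo, (0 : R) <= t by apply: nbhs_pinfty_ge; rewrite num_real.
  by apply: filterS => t t0; rewrite Yc.
have dY1 : forall t : R, 0 < t -> is_derive t 1 Y ((Y t - 1) * (- qf s g u (Y t))).
  by move=> t t0; rewrite -rhs_1; exact: dY.
have uq1 := uq cY dY1 cont_mq.
case: (ltgtP y0 1) y01 => // [y0lt1|y0e1] _; last first.
  subst y0.
  exists 1; split; first by apply: cst_case => t t0; apply/uq1.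
  by split; [rewrite rhs_q subrr mul0r | split => // _; lra].
have Yne1 (t : R) : 0 <= t -> Y t != 1.
  by move=> t0; apply/eqP => /(uq1 t t0); rewrite Y0 => e; lra.
have Ylt1 (t : R) : 0 <= t -> Y t < 1.
  move=> t0; rewrite ltNge; apply/negP => Yt.
  have [c cI Yc] : exists2 c, c \in `[0, t] & Y c = 1.
    apply: IVT => //; first exact: cont_within.
    rewrite Y0; apply/andP; split.
      by rewrite ge_min; apply/orP; left; lra.
    by rewrite le_max; apply/orP; right.
  move: cI; rewrite in_itv /= => /andP[c0 _].
  by move: (Yne1 c c0); rewrite Yc eqxx.
have fL1 (L : R) : Y t @[t --> +oo] --> L -> L <= 1.
  move=> YL; apply: (cvgr_to_le YL).
  have : \forall t \near +oo, (0 : R) <= t by apply: nbhs_pinfty_ge; rewrite num_real.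
  by apply: filterS => t t0; apply/ltW/Ylt1.
have froot (L : R) : Y t @[t --> +oo] --> L -> ode_rhs s g u L = 0.
  by move=> YL; apply: (lim_root dY cont_rhs YL).
have uqc (c : R) : qf s g u c = 0 -> forall T, 0 <= T -> (Y T = c <-> Y 0 = c).
  move=> qc.
  have dYc : forall t : R, 0 < t -> is_derive t 1 Y
      ((Y t - c) * ((1 - Y t) * g * (Y t - ((s + g) / g - c)))).
    by move=> t t0; rewrite -(rhs_root _ qc); exact: dY.
  exact: (uq cY dYc (@cont_kc c)).
have cqY (T : R) : {within `[0, T], continuous (qf s g u \o Y)}.
  exact: cont_within_comp cont_q.
have sgn_keep (t : R) : 0 <= t -> qf s g u (Y t) = 0 -> qf s g u y0 = 0.
  move=> t0 qt; have := (uqc _ qt t t0).1 erefl.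
  by rewrite Y0 => ->.
case: (ltgtP (qf s g u y0) 0) => qy0.
-
  have qneg (t : R) : 0 <= t -> qf s g u (Y t) < 0.
    move=> t0; rewrite ltNge; apply/negP => qt.
    have [c cI qc] : exists2 c, c \in `[0, t] & (qf s g u \o Y) c = 0.
      apply: IVT => //; rewrite /= Y0; apply/andP; split.
        by rewrite ge_min; apply/orP; left; lra.
      by rewrite le_max; apply/orP; right.
    move: cI; rewrite in_itv /= => /andP[c0 _].
    by move: (sgn_keep c c0 qc); lra.
  have Ypos (t : R) : 0 <= t -> 0 < Y t.
    move=> t0; have := qneg t t0; rewrite /qf => h.
    rewrite ltNge; apply/negP => Yt0.
    have h1 : 0 <= g * Y t ^+ 2 by rewrite mulr_ge0 ?sqr_ge0 // ltW.
    have h2 : (s + g) * Y t <= 0.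
      by rewrite mulr_ge0_le0 // addr_ge0 // ltW.
    move: h h1 h2 hu; set a := g * Y t ^+ 2; set b := (s + g) * Y t.
    lra.
  have mY : forall x y : R, 0 <= x -> x <= y -> Y y <= Y x.
    apply: ler0_derive1_nincry => //.
    + by move=> x; rewrite in_itv /= andbT => x0; exact: (@ex_derive _ _ _ _ _ _ _ (dY x x0)).
    + move=> x; rewrite in_itv /= andbT => x0.
      rewrite derive1E; have [_ ->] := dY x x0.
      rewrite rhs_q; apply: mulr_ge0_le0; last exact/ltW/qneg/ltW.
      by rewrite subr_ge0; apply/ltW/Ylt1/ltW.
  have [L' YL'] := @mono_cvg (fun t => - Y t) 0
     (fun x y x0 xy => ltac:(rewrite lerN2; exact: mY x y x0 xy))
     (fun t t0 => ltac:(rewrite oppr_le0; exact/ltW/Ypos)).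
  have YL : Y t @[t --> +oo] --> - L'.
    have -> : Y = (fun t => - (- Y t)) by apply/funext => t; rewrite opprK.
    exact: cvgN.
  exists (- L'); split => //; split; first exact: froot.
  split; first exact: fL1.
  split; first by move=> e; lra.
  move=> _; left.
  have : - L' <= y0.
    apply: (cvgr_to_le YL).
    have : \forall t \near +oo, (0 : R) <= t by apply: nbhs_pinfty_ge; rewrite num_real.
    by apply: filterS => t t0; rewrite -Y0; apply: mY.
  lra.
-
  have qpos (t : R) : 0 <= t -> 0 < qf s g u (Y t).
    move=> t0; rewrite ltNge; apply/negP => qt.
    have [c cI qc] : exists2 c, c \in `[0, t] & (qf s g u \o Y) c = 0.
      apply: IVT => //; rewrite /= Y0; apply/andP; split.
        by rewrite ge_min; apply/orP; right.
      by rewrite le_max; apply/orP; left; lra.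
    move: cI; rewrite in_itv /= => /andP[c0 _].
    by move: (sgn_keep c c0 qc); lra.
  have mY : forall x y : R, 0 <= x -> x <= y -> Y x <= Y y.
    apply: ger0_derive1_ndecry => //.
    + by move=> x; rewrite in_itv /= andbT => x0; exact: (@ex_derive _ _ _ _ _ _ _ (dY x x0)).
    + move=> x; rewrite in_itv /= andbT => x0.
      rewrite derive1E; have [_ ->] := dY x x0.
      rewrite rhs_q; apply: mulr_ge0; last exact/ltW/qpos/ltW.
      by rewrite subr_ge0; apply/ltW/Ylt1/ltW.
  have [L YL] := @mono_cvg Y 1 mY (fun t t0 => ltW (Ylt1 t t0)).
  exists L; split => //; split; first exact: froot.
  split; first exact: fL1.
  split; first by move=> e; lra.
  move=> _; right.
  have qYL : (qf s g u \o Y) t @[t --> +oo] --> qf s g u L.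
    by apply: continuous_cvg => //; exact: cont_q.
  apply: (cvgr_to_ge qYL).
  have : \forall t \near +oo, (0 : R) <= t by apply: nbhs_pinfty_ge; rewrite num_real.
  by apply: filterS => t t0; apply/ltW/qpos.
-
  have Yc (t : R) : 0 <= t -> Y t = y0.
    by move=> t0; apply/(uqc _ qy0 t t0).
  exists y0; split; first exact: cst_case.
  split; first by rewrite rhs_q qy0 mulr0.
  split; first lra.
  split; first by move=> e; lra.
  by move=> _; left.
Qed.
End P.
Lemma ybar2_eq (s g u : R) : 0 < s -> 0 < g -> 0 < u -> 0 <= (g + s) ^+ 2 - 4 * u * g ->
  ybar2 s g u = 2 * u / (g + s + Num.sqrt ((g + s) ^+ 2 - 4 * u * g)).
Proof.
move=> hs hg hu.
set D := (g + s) ^+ 2 - 4 * u * g => D0.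
have gn0 : g != 0 by rewrite gt_eqF.
have e : (1 + s / g) ^+ 2 - 4 * u / g = D * (g^-1) ^+ 2 by rewrite /D; field.
rewrite /ybar2 e sqrtrM // sqrtr_sqr ger0_norm ?invr_ge0 ?ltW //.
set S := Num.sqrt D.
have S0 : 0 <= S by exact: sqrtr_ge0.
have SS : S ^+ 2 = D by rewrite sqr_sqrtr.
have gsS : g + s + S != 0 by rewrite gt_eqF //; lra.
have H : 2^-1 * (1 + s / g - S * g^-1) * (g + s + S) = 2 * u.
  rewrite (_ : 2^-1 * (1 + s / g - S * g^-1) * (g + s + S) = ((g + s) ^+ 2 - S ^+ 2) / (2 * g)).
    by rewrite SS /D; field.
  by field.
by rewrite -H mulfK.
Qed.

Lemma ybar2_lim (s u : R) : 0 < s -> 0 < u -> ybar2 s g u @[g --> 0^'+] --> u / s.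
Proof.
move=> hs hu.
pose D g := (g + s) ^+ 2 - 4 * u * g.
pose F g := 2 * u / (g + s + Num.sqrt (D g)).
have cD : continuous D.
  apply: (cont_ext _ (@cont3 0 1 (2 * s - 4 * u) (s ^+ 2))) => y; rewrite /D; ring.
have F0 : F 0 = u / s.
  rewrite /F /D add0r mulr0 subr0 sqrtr_sqr ger0_norm ?ltW //.
  by field; rewrite !gt_eqF // addr_gt0.
have HF : F g @[g --> 0] --> u / s.
  rewrite -F0; apply: cvgM; first exact: cvg_cst.
  apply: cvgV; first by rewrite add0r gt_eqF //; have := sqrtr_ge0 (D 0); lra.
  apply: cvgD; first by apply: cvgD; [exact: cvg_id | exact: cvg_cst].
  exact: (continuous_cvg _ (@sqrt_continuous R (D 0)) (cD 0)).
apply: cvg_trans (cvg_at_right_filter HF).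
apply: near_eq_cvg.
have e0 : 0 < s ^+ 2 / (4 * u) by rewrite divr_gt0 ?exprn_gt0 ?mulr_gt0.
near=> g.
have g0 : 0 < g by near: g; exact: nbhs_right_gt.
have gs : g < s ^+ 2 / (4 * u) by near: g; exact: nbhs_right_lt.
rewrite /F ybar2_eq //.
move: gs; rewrite ltr_pdivlMr ?mulr_gt0 // /D => gs.
have : 0 <= g * g by rewrite mulr_ge0 ?ltW.
have : 0 <= g * s by rewrite mulr_ge0 ?ltW.
rewrite !expr2. lra.
Unshelve. all: by end_near.
Qed.
Lemma ident_small (s g u L : R) : 0 < s -> 0 < g -> 0 < u -> u < s -> L <= 1 ->
  ode_rhs s g u L = 0 -> (L < 1 \/ 0 <= qf s g u L) -> L = ybar2 s g u.
Proof.
move=> hs hg hu us L1 fL hL.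
have gn0 : g != 0 by rewrite gt_eqF.
have Llt1 : L < 1.
  case: hL => // qL; rewrite lt_neqAle L1 andbT; apply/eqP => e.
  by move: qL; rewrite e /qf; lra.
have qL : qf s g u L = 0.
  move: fL; rewrite (rhs_q s g u) => /eqP; rewrite mulf_eq0 => /orP[|/eqP //].
  by rewrite subr_eq0 => /eqP e; lra.
set a := s / g; set b := u / g.
have ba : b < a by rewrite /a /b ltr_pM2r // invr_gt0.
have h : L ^+ 2 - (1 + a) * L + b = 0.
  rewrite (_ : L ^+ 2 - (1 + a) * L + b = qf s g u L / g); first by rewrite qL mul0r.
  by rewrite /qf /a /b; field.
have eD : (1 + s / g) ^+ 2 - 4 * u / g = (2 * L - 1 - a) ^+ 2.
  rewrite (_ : (1 + s / g) ^+ 2 - 4 * u / g = (2 * L - 1 - a) ^+ 2 - 4 * (L ^+ 2 - (1 + a) * L + b)).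
    by rewrite h mulr0 subr0.
  by rewrite /a /b; field.
rewrite /ybar2 eD sqrtr_sqr -/a.
case: (leP (2 * L - 1 - a) 0) => hs2.
  by rewrite ler0_norm //; field.
exfalso.
have h1 : 0 < 1 - L by lra.
have h2 : 0 < L - a by lra.
have : 0 < (1 - L) * (L - a) by rewrite mulr_gt0.
move: h; rewrite !expr2 => h. nra.
Qed.

Lemma ident_big (s g u L : R) : 0 < s -> 0 < g -> s <= u -> g < s -> L <= 1 ->
  ode_rhs s g u L = 0 -> L = 1.
Proof.
move=> hs hg us gs L1 fL.
apply/eqP; rewrite eq_le L1 /=; rewrite leNgt; apply/negP => Llt1.
have h1 : 0 < 1 - L by lra.
have h2 : g * L < g by rewrite gtr_pMr.
have qpos : 0 < qf s g u L.
  rewrite (_ : qf s g u L = (1 - L) * (s - g * L) + (u - s)); last by rewrite /qf; ring.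
  have : 0 < (1 - L) * (s - g * L) by rewrite mulr_gt0 //; lra.
  lra.
move: fL; rewrite (rhs_q s g u) => fL.
have : 0 < (1 - L) * qf s g u L by rewrite mulr_gt0.
by rewrite fL ltxx.
Qed.
End S.

Unset Implicit Arguments.

Theorem proposition3p1 (R : realType) (s u : R) (hs : 0 < s) (hu : 0 < u) :
  (ybar2 s g u @[g --> 0^'+] --> u / s) /\
  (forall (y0 : R) (Y : R -> R -> R),
     0 <= y0 <= 1 ->
     (forall g : R, 0 < g -> is_ivp_solution s g u y0 (Y g)) ->
     exists yinf : R -> R,
       (forall g : R, 0 < g -> Y g t @[t --> +oo] --> yinf g) /\
       (yinf g @[g --> 0^'+] --> (if y0 == 1 then 1 else Num.min (u / s) 1))).
Proof.
split; first exact: ybar2_lim.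
move=> y0 Y hy0 hY.
have H : forall g : R, exists L : R, 0 < g -> (Y g t @[t --> +oo] --> L /\
    ode_rhs s g u L = 0 /\ L <= 1 /\ (y0 = 1 -> L = 1) /\ (y0 < 1 -> L < 1 \/ 0 <= qf s g u L)).
  move=> g; case: (ltP 0 g) => g0; last by exists 0.
  have [L HL] := conv hs g0 hu hy0 (hY g g0).
  by exists L.
have [yinf Hy] := choice H.
exists yinf; split; first by move=> g g0; have [] := Hy g g0.
case: eqP => [e|ne].
- have cc : (fun=> 1) (g : R) @[g --> 0^'+] --> (1 : R) by apply: cvg_cst.
  apply: cvg_trans cc; apply: near_eq_cvg.
  near=> g.
  have g0 : 0 < g by near: g; exact: nbhs_right_gt.
  by have [_ [_ [_ [->]]]] := Hy g g0.
- have y01 : y0 < 1 by move: hy0 => /andP[_]; rewrite le_eqVlt => /orP[/eqP|] //.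
  case: (ltP u s) => us.
  + rewrite min_l; last by rewrite ler_pdivrMr // mul1r ltW.
    apply: cvg_trans (ybar2_lim hs hu); apply: near_eq_cvg.
    near=> g.
    have g0 : 0 < g by near: g; exact: nbhs_right_gt.
    have [_ [fL [L1 [_ hL]]]] := Hy g g0.
    by rewrite (ident_small hs g0 hu us L1 fL (hL y01)).
  + rewrite min_r; last by rewrite ler_pdivlMr // mul1r.
    have cc : (fun=> 1) (g : R) @[g --> 0^'+] --> (1 : R) by apply: cvg_cst.
    apply: cvg_trans cc; apply: near_eq_cvg.
    near=> g.
    have g0 : 0 < g by near: g; exact: nbhs_right_gt.
    have gs : g < s by near: g; exact: nbhs_right_lt.
    have [_ [fL [L1 _]]] := Hy g g0.
    by rewrite (ident_big hs g0 us gs L1 fL).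
Unshelve. all: by end_near.
Qed.
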